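(* For every $k\in\mathbb N^+$, $P_2\le P_k$ (i.e. $P_2$ pp constructs $P_k$).
   Context: $P_k$ is the directed path with vertex set $\{0,\dots,k-1\}$ and edges $(i,i+1)$ for $0\le i<k-1$. A primitive positive formula is $\exists y_1,\dots,y_n(\psi_1\wedge\dots\wedge\psi_m)$ where each $\psi_i$ is $\bot$, $z_1=z_2$, or $E(z_1,z_2)$. For a digraph $H=(V,E)$, a pp power of dimension $d$ is the digraph on $V^d$ with edge set $\{(u,v):\phi(u_1,\dots,u_d,v_1,\dots,v_d)\text{ holds in }H\}$ for a pp formula $\phi$. $H\le G$ means $G$ is homomorphically equivalent (homomorphisms in both directions) to a pp power of $H$. *)

(* Defs.v *)
From mathcomp Require Import all_boot.
Set Implicit Arguments. Unset Strict Implicit. Unset Printing Implicit Defensive.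

Record digraph := Digraph { vert : Type; edge : vert -> vert -> Prop }.

Definition path_digraph (k : nat) : digraph :=
  @Digraph 'I_k (fun i j : 'I_k => (nat_of_ord i).+1 = nat_of_ord j).

Inductive atom (X : Type) :=
  | ABot : atom X
  | AEq : X -> X -> atom X
  | AEdge : X -> X -> atom X.

(* Variables of a pp formula defining a pp power of dimension d with n
   existentially quantified variables: the free variables u_1..u_d (inl (inl i)),
   v_1..v_d (inl (inr i)) and the quantified y_1..y_n (inr j). *)
Definition ppvar (d n : nat) : Type := ('I_d + 'I_d + 'I_n)%type.

(* A primitive positive formula with 2d free variables
   exists y_1..y_n (psi_1 /\ ... /\ psi_m). *)
Record ppformula (d : nat) := PPFormula {
  pp_nex : nat;
  pp_atoms : seq (atom (ppvar d pp_nex)) }.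

Definition atom_holds (G : digraph) (X : Type) (env : X -> vert G) (a : atom X) : Prop :=
  match a with
  | ABot => False
  | AEq x y => env x = env y
  | AEdge x y => edge (env x) (env y)
  end.

Definition ppvar_env (G : digraph) (d n : nat)
  (u v : 'I_d -> vert G) (y : 'I_n -> vert G) (z : ppvar d n) : vert G :=
  match z with
  | inl (inl i) => u i
  | inl (inr i) => v i
  | inr j => y j
  end.

Arguments atom_holds : clear implicits.
Definition pp_holds (G : digraph) (d : nat) (phi : ppformula d)
  (u v : 'I_d -> vert G) : Prop :=
  exists y : 'I_(pp_nex phi) -> vert G,
    foldr (fun a P => atom_holds G _ (ppvar_env u v y) a /\ P) True (pp_atoms phi).

Arguments pp_holds : clear implicits.
Definition pp_power (G : digraph) (d : nat) (phi : ppformula d) : digraph :=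
  @Digraph ('I_d -> vert G) (fun u v => pp_holds G d phi u v).

Definition hom (G H : digraph) (f : vert G -> vert H) : Prop :=
  forall x y, edge x y -> edge (f x) (f y).

Definition hom_equiv (G H : digraph) : Prop :=
  (exists f, @hom G H f) /\ (exists g, @hom H G g).

Arguments pp_power : clear implicits.
Definition pp_constructs (H G : digraph) : Prop :=
  exists (d : nat) (phi : ppformula d), hom_equiv G (pp_power H d phi).

(* Main.v *)
Require Import Defs.
From mathcomp Require Import all_boot.
From Stdlib Require List.

Lemma foldr_andP (A : Type) (Q : A -> Prop) (s : seq A) :
  foldr (fun a P => Q a /\ P) True s <-> (forall a, List.In a s -> Q a).
Proof.
elim: s => [|a s IH] /=; first by split.
split.
  by case=> Ha /IH Hs b [<-|Hb] //; apply: Hs.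
by move=> H; split; [apply: H; left | apply/IH => b Hb; apply: H; right].
Qed.

Lemma mem_In (T : eqType) (x : T) (s : seq T) : x \in s -> List.In x s.
Proof.
elim: s => [//|a s IH]; rewrite in_cons => /orP [/eqP ->|/IH H]; [left | right].
by []. by [].
Qed.

Definition phiP (n : nat) : ppformula n.+1 :=
  @PPFormula n.+1 2
    [:: AEdge (inr ord0) (inl (inr ord0)),
        AEdge (inl (inl ord_max)) (inr ord_max)
      & map (fun j : 'I_n => AEq (inl (inl (widen_ord (leqnSn n) j)))
                                  (inl (inr (lift ord0 j)))) (enum 'I_n)].

Definition phi0 : ppformula 0 := @PPFormula 0 0 [:: ABot _].

Theorem mainTheorem5 (k : nat) (hk : 0 < k) :
  pp_constructs (path_digraph 2) (path_digraph k).
Proof.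
case: k hk => [//|[|n]] _.
  exists 0, phi0; split.
    exists (fun _ => fun j : 'I_0 => (ord0 : 'I_2)).
    by move=> [x Hx] [y Hy] /= E; move: Hx Hy; rewrite -E.
  exists (fun _ => (ord0 : 'I_1)).
  by move=> x y [z /= []].
exists n.+1, (phiP n); split.
  exists (fun (i : 'I_n.+2) (j : 'I_n.+1) => (inord (j < i) : 'I_2)).
  move=> i i' /= E.
  exists id; apply/foldr_andP => a /= [<-|[<-|]] /=.
  - by rewrite -E inordK.
  - have := ltn_ord i'; rewrite -E ltnS => Hi.
    by rewrite /= ltnNge -ltnS Hi inordK.
  - move/List.in_map_iff => [j [<- _]] /=.
    by rewrite -E.
exists (fun u : 'I_n.+1 -> 'I_2 => (inord (\sum_(j < n.+1) val (u j)) : 'I_n.+2)).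
move=> u v [y /foldr_andP H] /=.
have H1 := H _ (or_introl erefl); have H2 := H _ (or_intror (or_introl erefl)).
move: H1 H2 => /= H1 H2.
have H3 : forall j : 'I_n, u (widen_ord (leqnSn n) j) = v (lift ord0 j).
  move=> j; apply: (H (AEq (inl (inl (widen_ord (leqnSn n) j))) (inl (inr (lift ord0 j))))).
  right; right; apply/List.in_map_iff; exists j; split => //.
  by apply: mem_In; rewrite mem_enum.
have bnd : forall w : 'I_n.+1 -> 'I_2, \sum_(j < n.+1) (w j : nat) <= n.+1.
  move=> w; have E : \sum_(j < n.+1) 1 = n.+1 by rewrite sum_nat_const card_ord muln1.
  rewrite -[X in _ <= X]E.
  apply: leq_sum => j _. exact: (ltn_ord (w j)).
have Hy0 : (y ord0 : nat) = 0.
  have := ltn_ord (v ord0); by rewrite -H1 !ltnS leqn0 => /eqP.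
have Hu : (u ord_max : nat) = 0.
  have := ltn_ord (y ord_max); by rewrite -H2 !ltnS leqn0 => /eqP.
rewrite !inordK ?ltnS ?bnd //.
rewrite [in LHS]big_ord_recr [in RHS]big_ord_recl /= -H1 Hy0 Hu addn0.
by congr (_ .+1); apply: eq_bigr => j _; rewrite H3.
Qed.
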